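(* We have $[w]_{A_\infty}'\leq c_d[w]_{A_\infty}$, where $c_d$ is a constant such that the logarithmic maximal function $M_0 f:=\sup_{Q}\exp\big(\frac{1}{|Q|}\int_Q\log|f|\big)\chi_Q$ satisfies $\|M_0f\|_{L^p}\leq c_{d}^{1/p}\|f\|_{L^p}$ for all $p\in(0,\infty)$.
   Context: Weights on $\mathbb{R}^d$, suprema over all cubes $Q$. $[w]_{A_\infty}:=\sup_Q\big(\frac{1}{|Q|}\int_Q w\big)\exp\big(\frac{1}{|Q|}\int_Q \log w^{-1}\big)$; $[w]_{A_\infty}':=\sup_Q\frac{1}{w(Q)}\int_Q M(w\chi_Q)$, $M$ the Hardy--Littlewood maximal operator. Such a dimensional $c_d$ exists (e.g. $c_d=(2C_d)^2$, $C_d$ from the $L^2$ bound of $M$; $c_d=e$ in the dyadic case). *)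

(* Defs.v *)
From HB Require Import structures.
From mathcomp Require Import all_boot all_order all_algebra.
From mathcomp Require Import all_classical all_reals all_analysis.
Set Implicit Arguments. Unset Strict Implicit. Unset Printing Implicit Defensive.
Import Order.TTheory GRing.Theory Num.Theory.
Local Open Scope classical_set_scope.
Local Open Scope ring_scope.

Section Defs.
Variable R : realType.

Definition vcons (n : nat) (t : R) (v : 'rV[R]_n) : 'rV[R]_n.+1 :=
  \row_(i < n.+1) (if unlift ord0 i is Some j then v ord0 j else t).

(** Lebesgue integral over R^n of a nonnegative function, computed as the
    iterated one-dimensional Lebesgue integral (Tonelli); for nonnegative
    Borel functions this is the n-dimensional Lebesgue integral. *)
Fixpoint iint (n : nat) : ('rV[R]_n -> \bar R) -> \bar R :=
  match n with
  | 0 => fun f => f 0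
  | m.+1 => fun f =>
      (\int[@lebesgue_measure R]_t iint (fun v => f (vcons t v)))%E
  end.

Variable d : nat.

Definition borel_set (A : set 'rV[R]_d) : Prop := <<s (@open 'M[R^o]_(1, d)) >> A.
Definition borel_fun (f : 'rV[R]_d -> R) : Prop :=
  forall B : set R, measurable B -> borel_set (f @^-1` B).

Definition intp (A : set 'rV[R]_d) (g : 'rV[R]_d -> \bar R) : \bar R :=
  iint (fun x => ((\1_A x)%:E * g x)%E).

Definition leb (A : set 'rV[R]_d) : \bar R := intp A (fun _ => 1%E).

Definition ints (A : set 'rV[R]_d) (g : 'rV[R]_d -> \bar R) : \bar R :=
  (intp A (g^\+) - intp A (g^\-))%E.

Definition cube (a : 'rV[R]_d) (l : R) : set 'rV[R]_d :=
  [set x | forall i, a ord0 i <= x ord0 i <= a ord0 i + l].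
Definition is_cube (Q : set 'rV[R]_d) : Prop :=
  exists a l, 0 < l /\ Q = cube a l.

Definition avgp (Q : set 'rV[R]_d) (g : 'rV[R]_d -> \bar R) : \bar R :=
  ((fine (leb Q))^-1%:E * intp Q g)%E.
Definition avgs (Q : set 'rV[R]_d) (g : 'rV[R]_d -> \bar R) : \bar R :=
  ((fine (leb Q))^-1%:E * ints Q g)%E.

Definition logabs (y : R) : \bar R :=
  if y == 0 then -oo%E else (ln `|y|)%:E.

Definition HLM (f : 'rV[R]_d -> R) (x : 'rV[R]_d) : \bar R :=
  ereal_sup [set avgp Q (fun y => (`|f y|)%:E) | Q in [set Q | is_cube Q /\ Q x]].

Definition M0 (f : 'rV[R]_d -> R) (x : 'rV[R]_d) : \bar R :=
  ereal_sup [set expeR (avgs Q (fun y => logabs (f y))) |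
               Q in [set Q | is_cube Q /\ Q x]].

Definition Lpnorm (p : R) (g : 'rV[R]_d -> \bar R) : \bar R :=
  poweR (iint (fun x => poweR (`|g x|)%E p)) p^-1.

Definition weight (w : 'rV[R]_d -> R) : Prop :=
  [/\ borel_fun w, forall x, 0 <= w x,
      forall Q, is_cube Q -> (intp Q (fun x => (w x)%:E) < +oo)%E &
      leb [set x | w x = 0] = 0%E].

(** [w]_{A_oo} (Fujii--Wilson-type / exp-log definition) *)
Definition Ainf (w : 'rV[R]_d -> R) : \bar R :=
  ereal_sup [set (avgp Q (fun x => (w x)%:E) *
                  expeR (avgs Q (fun x => (- logabs (w x))%E)))%E |
             Q in is_cube].

Definition Ainf' (w : 'rV[R]_d -> R) : \bar R :=
  ereal_sup [set ((fine (intp Q (fun x => (w x)%:E)))^-1%:E *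
                  intp Q (HLM (fun x => (w x * \1_Q x)%R)))%E |
             Q in is_cube].

End Defs.

(* Main.v *)
Require Import Defs.
From HB Require Import structures.
From mathcomp Require Import all_boot all_order all_algebra.
From mathcomp Require Import all_classical all_reals all_analysis.
From mathcomp Require Import measurable_realfun lra ring.
Import Order.TTheory GRing.Theory Num.Theory.
Local Open Scope classical_set_scope.
Local Open Scope ring_scope.

Section IntLemmas.
Local Open Scope ereal_scope.
Context dd (T : measurableType dd) (R : realType).
Variable mu : {measure set T -> \bar R}.
Import HBNNSimple.

Lemma int_le (f g : T -> \bar R) : (forall x, 0 <= f x) -> (forall x, f x <= g x) ->
  \int[mu]_x f x <= \int[mu]_x g x.
Proof.
move=> f0 fg.
have g0 : forall x, 0 <= g x by move=> x; exact: le_trans (fg x).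
rewrite !ge0_integralTE//.
apply: le_ereal_sup => _ [h hf <-]; exists h => //= x.
exact: le_trans (hf x) (fg x).
Qed.

Lemma int_scale_le (f : T -> \bar R) (k : R) : (forall x, 0 <= f x) -> (0 <= k)%R ->
  \int[mu]_x (k%:E * f x) <= k%:E * \int[mu]_x f x.
Proof.
move=> f0 k0'; have [->|kn0] := eqVneq k 0%R.
  have -> : (fun x => (0%R)%:E * f x) = cst 0 by apply/funext=> x; rewrite mul0e.
  by rewrite integral0 mul0e.
have k0 : (0 < k)%R by rewrite lt0r kn0.
have kf0 : forall x, 0 <= k%:E * f x by move=> x; apply: mule_ge0; [rewrite lee_fin | exact: f0].
rewrite !ge0_integralTE//.
apply/ge_ereal_sup => _ [h hf <-] /=.
have ki0 : (0 <= k^-1)%R by rewrite invr_ge0 ltW.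
pose h' := scale_nnsfun h ki0.
have -> : sintegral mu h = k%:E * sintegral mu h'.
  rewrite /h' /scale_nnsfun.
  have -> : (mul_nnsfun (cst_nnsfun T (NngNum ki0)) h : T -> R) = (cst k^-1 \* h)%R by [].
  rewrite sintegralrM muleA -EFinM mulfV ?mul1e //; exact: lt0r_neq0.
rewrite lee_pmul2l ?lte_fin//.
apply: ereal_sup_ubound; exists h' => //= x.
rewrite -(@lee_pmul2l _ k%:E) ?lte_fin// -EFinM mulrA mulfV ?mul1r; [exact: hf | exact: lt0r_neq0].
Qed.
End IntLemmas.


Section IInt.
Local Open Scope ereal_scope.
Variable R : realType.

Lemma iint_ge0 n (f : 'rV[R]_n -> \bar R) : (forall x, 0 <= f x) -> 0 <= iint f.
Proof.
elim: n f => [|n IH] f f0 /=; first exact: f0.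
apply: integral_ge0 => t _; apply: IH => v; exact: f0.
Qed.

Lemma iint_le n (f g : 'rV[R]_n -> \bar R) : (forall x, 0 <= f x) ->
  (forall x, f x <= g x) -> iint f <= iint g.
Proof.
elim: n f g => [|n IH] f g f0 fg /=; first exact: fg.
apply: int_le => t; first by apply: iint_ge0 => v; exact: f0.
apply: IH => v; [exact: f0 | exact: fg].
Qed.

Lemma iint_scale_le n (f : 'rV[R]_n -> \bar R) (k : R) : (forall x, 0 <= f x) ->
  (0 <= k)%R -> iint (fun x => k%:E * f x) <= k%:E * iint f.
Proof.
elim: n f => [|n IH] f f0 k0 /=; first by [].
apply: (@le_trans _ _ (\int[lebesgue_measure]_t (k%:E * iint (fun v => f (vcons t v))))); last first.
  apply: int_scale_le => // t; exact: iint_ge0.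
apply: int_le => t.
  by apply: iint_ge0 => v; apply: mule_ge0; [rewrite lee_fin | exact: f0].
exact: IH.
Qed.
End IInt.

Set Implicit Arguments. Unset Strict Implicit.


Section Cube.
Local Open Scope ereal_scope.
Variable R : realType.

Lemma iint0 n : iint (fun _ : 'rV[R]_n => 0) = 0.
Proof.
elim: n => [//|n IH] /=; rewrite IH; exact: integral0.
Qed.

Definition rtl n (a : 'rV[R]_n.+1) : 'rV[R]_n := \row_j a ord0 (lift ord0 j).

Lemma vcons_cube n (a : 'rV[R]_n.+1) l t v :
  cube a l (vcons t v) <-> ((a ord0 ord0 <= t <= a ord0 ord0 + l)%R /\ cube (rtl a) l v).
Proof.
rewrite /cube /vcons /rtl /=; split.
  move=> H; split; first by have := H ord0; rewrite !mxE unlift_none.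
  by move=> j; have := H (lift ord0 j); rewrite !mxE liftK.
move=> [Ht Hv] i; rewrite mxE; case: unliftP => [j ->|->] //.
by have := Hv j; rewrite !mxE.
Qed.

Lemma leb_cube_gen n (a : 'rV[R]_n) l : (0 < l)%R ->
  iint (fun x => (\1_(cube a l) x)%:E * 1) = (l ^+ n)%:E.
Proof.
move=> l0; elim: n a => [|n IH] a /=.
  by rewrite indicE mem_set ?mule1 ?expr0 // => i; case: i.
pose I := `[a ord0 ord0, (a ord0 ord0 + l)%R]%classic.
have -> : (fun t => iint (fun v => (\1_(cube a l) (vcons t v))%:E * 1)) =
          (fun t => (l ^+ n)%:E * (\1_I t)%:E).
  apply/funext => t; rewrite indicE.
  have [tI|tI] := boolP (t \in I).
    rewrite mule1 -(IH (rtl a)); congr iint; apply/funext => v.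
    rewrite !indicE; suff -> : (vcons t v \in cube a l) = (v \in cube (rtl a) l) by [].
    apply/idP/idP => /set_mem H; apply/mem_set; first by case/vcons_cube: H.
    apply/vcons_cube; split => //.
    by move: tI => /set_mem; rewrite /I /= in_itv.
  rewrite mule0 -(iint0 n); congr iint; apply/funext => v.
  rewrite indicE memNset ?mul0e // => /vcons_cube [Ht _].
  by apply: (negP tI); apply/mem_set; rewrite /I /= in_itv.
have h1 : (0 <= l ^+ n)%R by rewrite exprn_ge0 // ltW.
have h2 : forall x : R, [set: R] x -> 0 <= (\1_I x : R)%:E by move=> x ?; rewrite lee_fin.
have h3 : measurable_fun setT (EFin \o (\1_I : R -> R)).
  apply/measurable_EFinP; apply: measurable_indic; exact: measurable_itv.
have := ge0_integralZl_EFin (@lebesgue_measure R) measurableT h2 h3 h1; rewrite /= => ->.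
rewrite integral_indic //; last exact: measurable_itv.
have HI := @lebesgue_measure_itv R `[a ord0 ord0, (a ord0 ord0 + l)%R].
rewrite /= lte_fin ltrDl l0 -EFinD addrAC subrr add0r in HI.
rewrite setIT.
transitivity ((l ^+ n)%:E * l%:E); first by congr (_ * _); exact: HI.
by rewrite -EFinM exprSr.
Qed.
End Cube.


Section Borel.
Variables (R : realType) (d : nat).
Let S := g_sigma_algebraType (@open 'M[R^o]_(1, d)).

Lemma cube_closed (a : 'rV[R]_d) l : @closed 'M[R^o]_(1, d) (cube a l).
Proof.
have -> : cube a l = \bigcap_(i in setT) ((fun M : 'M[R^o]_(1, d) => M ord0 i) @^-1`
   `[a ord0 i, a ord0 i + l]).
  apply/seteqP; split => x /=.
    by move=> H i _ /=; rewrite in_itv /=; exact: H.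
  by move=> H i; have := H i I; rewrite /= in_itv.
apply: closed_bigI => i _.
have := (@continuous_closedP 'M[R^o]_(1, d) R^o (fun M => M ord0 i)).1 (@coord_continuous R 1 d ord0 i); apply; exact: (@interval_closed R (BLeft _) (BRight _)).

Qed.

Lemma cube_borel (a : 'rV[R]_d) l : borel_set (cube a l).
Proof.
have op : borel_set (~` cube a l).
  apply: sub_gen_smallest; apply: closed_openC; exact: cube_closed.
rewrite -[cube a l]setCK; exact: (@measurableC _ S).
Qed.

Lemma borel_mulind (w : 'rV[R]_d -> R) (Q : set 'rV[R]_d) :
  borel_fun w -> borel_set Q -> borel_fun (fun x => w x * \1_Q x).
Proof.
move=> bw bQ B mB.
have hw : borel_set (w @^-1` B) by exact: bw.
have [B0|B0] := pselect (B 0).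
  have -> : (fun x => w x * \1_Q x) @^-1` B = (w @^-1` B `&` Q) `|` ~` Q.
    apply/seteqP; split => x /=; rewrite indicE.
      by case: (boolP (x \in Q)) => [/set_mem xQ|/negP xQ]; [rewrite mulr1; left|right => /mem_set].
    case=> [[Hb xQ]|xQ]; first by rewrite mem_set // mulr1.
    by rewrite memNset // mulr0.
  apply: (@measurableU _ S); [apply: (@measurableI _ S) => // | exact: (@measurableC _ S)].
have -> : (fun x => w x * \1_Q x) @^-1` B = (w @^-1` B `&` Q).
  apply/seteqP; split => x /=; rewrite indicE.
    by case: (boolP (x \in Q)) => [/set_mem xQ|/negP xQ]; rewrite ?mulr1 ?mulr0 // => /B0.
  by case=> Hb xQ; rewrite mem_set // mulr1.
exact: (@measurableI _ S).
Qed.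
End Borel.


Section Geo.
Variables (R : realType) (d : nat).

Definition sside (m l : R) := if m <= l then m else l.
Definition scorner (a b : 'rV[R]_d) (m l : R) : 'rV[R]_d :=
  \row_i (let s := sside m l in
          if b ord0 i <= a ord0 i then a ord0 i
          else if b ord0 i <= a ord0 i + l - s then b ord0 i else a ord0 i + l - s).

Lemma sside_gt0 m l : 0 < m -> 0 < l -> 0 < sside m l.
Proof. by rewrite /sside; case: ifP. Qed.

Lemma sside_le m l : sside m l <= m.
Proof. rewrite /sside; case: ifP => // /negbT; rewrite -ltNge => /ltW. done. Qed.

Lemma geo_sub (a b : 'rV[R]_d) m l : 0 < m -> 0 < l ->
  cube (scorner a b m l) (sside m l) `<=` cube a l.
Proof.
move=> m0 l0 y Hy i; have := Hy i; rewrite /scorner /sside !mxE.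
case: (leP m l) => ml; case: (leP (b ord0 i) (a ord0 i)) => ba;
  try case: (leP (b ord0 i) (a ord0 i + l - _)) => bal; lra.
Qed.

Lemma geo_cap (a b : 'rV[R]_d) m l : 0 < m -> 0 < l ->
  cube b m `&` cube a l `<=` cube (scorner a b m l) (sside m l).
Proof.
move=> m0 l0 y [Hb Ha] i; have := Hb i; have := Ha i; rewrite /scorner /sside !mxE.
case: (leP m l) => ml; case: (leP (b ord0 i) (a ord0 i)) => ba;
  try case: (leP (b ord0 i) (a ord0 i + l - _)) => bal; lra.
Qed.
End Geo.


Section Basic.
Variables (R : realType) (d : nat).
Local Open Scope ereal_scope.

Lemma leb_cube (a : 'rV[R]_d) l : (0 < l)%R -> leb (cube a l) = (l ^+ d)%:E.
Proof. exact: leb_cube_gen. Qed.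

Lemma intp_ge0 (A : set 'rV[R]_d) g : (forall x, 0 <= g x) -> 0 <= intp A g.
Proof. by move=> g0; apply: iint_ge0 => x; apply: mule_ge0; rewrite ?lee_fin. Qed.

Lemma intp_eq (A : set 'rV[R]_d) g1 g2 : (forall x, A x -> g1 x = g2 x) ->
  intp A g1 = intp A g2.
Proof.
move=> E; rewrite /intp; congr iint; apply/funext => x; rewrite indicE.
by case: (boolP (x \in A)) => [/set_mem /E ->|_]; rewrite ?mul0e.
Qed.

Lemma ints_eq (A : set 'rV[R]_d) g1 g2 : (forall x, A x -> g1 x = g2 x) ->
  ints A g1 = ints A g2.
Proof.
move=> E; rewrite /ints (@intp_eq A (g1^\+) (g2^\+)) ?(@intp_eq A (g1^\-) (g2^\-)) //.
  by move=> x /E; rewrite !funenegE => ->.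
by move=> x /E; rewrite !funeposE => ->.
Qed.

Lemma avgp_ge0 (A : set 'rV[R]_d) g : (forall x, 0 <= g x) -> 0 <= avgp A g.
Proof.
move=> g0; rewrite /avgp; apply: mule_ge0; last exact: intp_ge0.
rewrite lee_fin invr_ge0; apply: fine_ge0; rewrite /leb; apply: intp_ge0 => x.
by [].
Qed.

Lemma cube_self (x : 'rV[R]_d) : cube x 1 x.
Proof. by move=> i; rewrite lexx /= lerDl ler01. Qed.

Lemma is_cube_self (x : 'rV[R]_d) : is_cube (cube x 1).
Proof. by exists x, 1%R; split. Qed.

Lemma HLM_ge0 f (x : 'rV[R]_d) : 0 <= HLM f x.
Proof.
apply: le_trans (ereal_sup_ubound _); first last.
  exists (cube x 1); first by split; [exact: is_cube_self | exact: cube_self].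
  reflexivity.
by apply: avgp_ge0 => y; rewrite lee_fin.
Qed.

Lemma M0_ge0 f (x : 'rV[R]_d) : 0 <= M0 f x.
Proof.
apply: le_trans (ereal_sup_ubound _); first last.
  exists (cube x 1); first by split; [exact: is_cube_self | exact: cube_self].
  reflexivity.
exact: expeR_ge0.
Qed.

Lemma Ainf_ge0 (w : 'rV[R]_d -> R) : (forall x, 0 <= w x)%R -> 0 <= Ainf w.
Proof.
move=> w0; apply: le_trans (ereal_sup_ubound _); first last.
  exists (cube (0 : 'rV[R]_d)%R 1); first exact: is_cube_self.
  reflexivity.
apply: mule_ge0; last exact: expeR_ge0.
by apply: avgp_ge0 => y; rewrite lee_fin.
Qed.

Lemma logpos_le (y : R) : (0 <= y)%R -> (maxe (logabs y) 0) <= y%:E.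
Proof.
move=> y0; rewrite /logabs; have [->|yn0] := eqVneq y 0%R.
  by rewrite maxNye.
have yp : (0 < y)%R by rewrite lt0r yn0.
rewrite ger0_norm // ge_max !lee_fin y0 andbT.
exact/ltW/ln_sublinear.
Qed.

End Basic.


Section Key.
Variables (R : realType) (d : nat).
Local Open Scope ereal_scope.

Lemma step2 (w : 'rV[R]_d -> R) (hw : weight w) (A : R) (HA : Ainf w = A%:E)
  (b : 'rV[R]_d) s : (0 < s)%R ->
  avgp (cube b s) (fun y => (w y)%:E) <=
    A%:E * expeR (avgs (cube b s) (fun y => logabs (w y))).
Proof.
move=> s0; case: hw => bw w0 wint wz.
set P := cube b s.
have Pc : is_cube P by exists b, s.
set h := fun y => logabs (w y).
set K := ((s ^+ d)^-1)%R.
have K0 : (0 < K)%R by rewrite invr_gt0 exprn_gt0.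
have hK : ((fine (leb P))^-1)%R = K by rewrite /P leb_cube.
have Wfin : intp P (fun y => (w y)%:E) \is a fin_num.
  by rewrite ge0_fin_numE ?wint //; apply: intp_ge0 => y; rewrite lee_fin.
have Xle : intp P (h^\+) <= intp P (fun y => (w y)%:E).
  apply: iint_le => y; first by apply: mule_ge0; rewrite ?lee_fin // funepos_ge0.
  apply: lee_wpmul2l; first by rewrite lee_fin.
  by rewrite funeposE; exact: logpos_le.
have Xfin : intp P (h^\+) \is a fin_num.
  rewrite ge0_fin_numE; last by apply: intp_ge0 => y; exact: funepos_ge0.
  by apply: le_lt_trans Xle _; rewrite -ge0_fin_numE ?Wfin //; apply: intp_ge0 => y; rewrite lee_fin.
have Y0 : 0 <= intp P (h^\-) by apply: intp_ge0 => y; exact: funeneg_ge0.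
have Hsup : avgp P (fun y => (w y)%:E) * expeR (avgs P (fun y => - h y)) <= A%:E.
  by rewrite -HA; apply: ereal_sup_ubound; exists P.
have Eneg : ints P (fun y => - h y) = intp P (h^\-) - intp P (h^\+).
  by rewrite /ints (funeposN h) (funenegN h).
move: Hsup; rewrite /avgs Eneg /ints /avgp hK.
rewrite -(fineK Wfin) -(fineK Xfin).
set W := fine _; set X := fine _.
move: Y0; set Y := intp P (h^\-) => Y0.
case/gee0P: Y0 => [->|[y y0 ->]].
  move=> H0.
  have e1 : K%:E * (+oo - X%:E) = +oo.
    by rewrite muleC (_ : +oo - X%:E = +oo) // gt0_mulye // lte_fin.
  have e2 : K%:E * (X%:E - +oo) = -oo.
    by rewrite muleC (_ : X%:E - +oo = -oo) // gt0_mulNye // lte_fin.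
  rewrite e1 /= in H0; rewrite e2 /= mule0.
  have KW : K%:E * W%:E = (K * W)%:E by [].
  rewrite KW lee_fin; case: (leP (K * W)%R 0%R) => // hKW; exfalso.
  by move: H0; rewrite KW muleC gt0_mulye ?lte_fin //.
rewrite -!EFinB.
move=> H0.
have H : (K * W * expR (K * (y - X)) <= A)%R by exact: H0.
change ((K * W)%:E <= (A * expR (K * (X - y)))%:E); rewrite lee_fin.
have e : (expR (K * (y - X)) * expR (K * (X - y)) = 1)%R.
  by rewrite -expRD -mulrDr addrA subrK subrr mulr0 expR0.
rewrite -[leLHS]mulr1 -e mulrA.
by apply: ler_wpM2r => //; exact: expR_ge0.
Qed.
End Key.


Section Key2.
Variables (R : realType) (d : nat).
Local Open Scope ereal_scope.

Lemma key (w : 'rV[R]_d -> R) (hw : weight w) (A : R) (HA : Ainf w = A%:E)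
  (a : 'rV[R]_d) l (l0 : (0 < l)%R) x (xQ : cube a l x) :
  HLM (fun y => w y * \1_(cube a l) y)%R x <=
    A%:E * M0 (fun y => w y * \1_(cube a l) y)%R x.
Proof.
have w0 : forall y, (0 <= w y)%R by case: hw.
have A0 : (0 <= A)%R by rewrite -lee_fin -HA; apply: Ainf_ge0.
set g := fun y => (w y * \1_(cube a l) y)%R.
apply: ge_ereal_sup => _ [P [[b [m [m0 ->]]] Px] <-].
set s := sside m l; set b' := scorner a b m l.
have s0 : (0 < s)%R := sside_gt0 m0 l0.
have sm : (s <= m)%R := sside_le m l.
have sub := @geo_sub R d a b m l m0 l0; have cap := @geo_cap R d a b m l m0 l0.
have xP' : cube b' s x := cap x (conj Px xQ).
have step1 : avgp (cube b m) (fun y => (`|g y|)%:E) <=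
             avgp (cube b' s) (fun y => (w y)%:E).
  rewrite /avgp !leb_cube //=.
  apply: lee_pmul.
  - by rewrite lee_fin invr_ge0 exprn_ge0 // ltW.
  - by apply: intp_ge0 => y; rewrite lee_fin.
  - rewrite lee_fin lef_pV2 ?posrE ?exprn_gt0 //.
    by apply: lerXn2r => //; rewrite nnegrE ltW.
  - apply: iint_le => y; first by rewrite -EFinM lee_fin mulr_ge0.
    rewrite -!EFinM lee_fin /g !indicE.
    case: (boolP (y \in cube b m)) => [yP|]; last by rewrite mul0r mulr_ge0.
    case: (boolP (y \in cube a l)) => [yQ|]; last by rewrite mulr0 normr0 mulr0 mulr_ge0.
    rewrite mem_set; last by apply: cap; split; apply/set_mem.
    by rewrite !mul1r mulr1 ger0_norm.
apply: le_trans step1 _.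
apply: le_trans (step2 hw HA b' s0) _.
apply: lee_wpmul2l; first by rewrite lee_fin.
rewrite /avgs (@ints_eq _ _ (cube b' s) (fun y => logabs (w y)) (fun y => logabs (g y))).
  apply: ereal_sup_ubound; exists (cube b' s) => //.
  by split => //; exists b', s.
by move=> y /sub yQ; rewrite /g indicE mem_set // mulr1.
Qed.
End Key2.

Unset Implicit Arguments. Set Strict Implicit.


Theorem proposition2p2 (R : realType) (d : nat) (c : R) :
  0 < c ->
  (forall (p : R) (f : 'rV[R]_d -> R), 0 < p -> borel_fun f ->
     (Lpnorm p (M0 f) <= (c `^ p^-1)%:E * Lpnorm p (fun x => (f x)%:E))%E) ->
  forall w : 'rV[R]_d -> R, weight w ->
  (Ainf' w <= c%:E * Ainf w)%E.
Proof.
move=> c0 Hyp w hw.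
have w0 : forall y, 0 <= w y by case: hw.
have bw : borel_fun w by case: hw.
have wint : forall Q, is_cube Q -> (intp Q (fun x => (w x)%:E) < +oo)%E by case: hw.
case/gee0P: (Ainf_ge0 w0) => [->|[A A0 HA]].
  by rewrite muleC gt0_mulye ?lte_fin // leey.
rewrite HA.
apply: ge_ereal_sup => _ [Q [a [l [l0 ->]]] <-].
set g := fun y => w y * \1_(cube a l) y.
have Wfin : (intp (cube a l) (fun y => (w y)%:E)) \is a fin_num.
  have I0 : (0 <= intp (cube a l) (fun y => (w y)%:E))%E.
    by apply: intp_ge0 => y; rewrite lee_fin.
  by rewrite ge0_fin_numE // wint //; exists a, l.
have WE := fineK Wfin.
set W := fine (intp (cube a l) (fun y => (w y)%:E)) in WE *.
have W0 : 0 <= W by apply: fine_ge0; apply: intp_ge0 => y; rewrite lee_fin.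
have [->|Wn0] := eqVneq W 0.
  by rewrite invr0 mul0e; apply: mule_ge0; rewrite lee_fin // ltW.
have Wp : 0 < W by rewrite lt0r Wn0.
have bg : borel_fun g by apply: borel_mulind => //; exact: cube_borel.
have HL := Hyp 1 g ltr01 bg.
rewrite /Lpnorm invr1 in HL.
rewrite powRr1 in HL; last exact: ltW.
have E1 : (fun x => `|M0 g x| `^ 1)%E = M0 g.
  apply/funext => x; rewrite poweRe1 ?abse_ge0 //; apply: gee0_abs; exact: M0_ge0.
have E2 : (fun x => `|(g x)%:E| `^ 1)%E = (fun x => (\1_(cube a l) x)%:E * (w x)%:E)%E.
  apply/funext => x; rewrite poweRe1 ?abse_ge0 // /g /= -EFinM.
  by rewrite normrM ger0_norm // ger0_norm // mulrC.
rewrite E1 E2 !poweRe1 in HL; first last.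
- by apply: iint_ge0 => x; apply: M0_ge0.
- by apply: iint_ge0 => x; apply: mule_ge0; rewrite lee_fin.
have {}HL : (iint (M0 g) <= c%:E * W%:E)%E by rewrite WE; exact: HL.
have S1 : (intp (cube a l) (HLM g) <= A%:E * iint (M0 g))%E.
  apply: (@le_trans _ _ (iint (fun y => A%:E * ((\1_(cube a l) y)%:E * M0 g y))%E)).
    apply: iint_le => y; first by apply: mule_ge0; [rewrite lee_fin | exact: HLM_ge0].
    rewrite indicE; case: (boolP (y \in cube a l)) => [/set_mem yQ|_].
      by rewrite !mul1e; apply: key.
    by rewrite !mul0e mule0.
  apply: (le_trans (@iint_scale_le R d (fun y => ((\1_(cube a l) y)%:E * M0 g y)%E) A _ A0)).
    by move=> y; apply: mule_ge0; [rewrite lee_fin | exact: M0_ge0].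
  apply: lee_wpmul2l; first by rewrite lee_fin.
  apply: iint_le => y; first by apply: mule_ge0; [rewrite lee_fin | exact: M0_ge0].
  rewrite indicE; case: (y \in cube a l); first by rewrite mul1e.
  by rewrite mul0e; exact: M0_ge0.
have A0' : (0 <= A%:E)%E by rewrite lee_fin.
have S2 := le_trans S1 (lee_wpmul2l A0' HL).
apply: le_trans (lee_wpmul2l _ S2) _; first by rewrite lee_fin invr_ge0.
have -> : ((W^-1)%:E * (A%:E * (c%:E * W%:E)) = (c * A)%:E)%E.
  change (((W^-1) * (A * (c * W)))%:E = (c * A)%:E); congr EFin.
  by field.
by [].
Qed.
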